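(* Let $x,y$ be positive real numbers with $x\ne y$. For positive integers $d,d_1,d_2$ define \[ \mu_d=(x+y)^d-x^d-y^d,\quad \omega_d=x^d+y^d-2\left(\tfrac{x+y}{2}\right)^d, \] \[ \psi_{d_1,d_2}=x^{d_1}y^{d_2}+x^{d_2}y^{d_1},\quad \phi_{d_1,d_2}=2\left(\tfrac{x+y}{2}\right)^{d_1+d_2}-x^{d_1}y^{d_2}-x^{d_2}y^{d_1}. \] Let $a,b,s,t$ be positive integers with $a\ge 2$ and $b\ge t\ge s\ge a>\binom{b-a}{2}$. Then \[ \frac{\omega_t}{\mu_t}\le\frac{\omega_a}{\mu_a}<\frac{\phi_{s,t}}{\psi_{s,t}}, \] equivalently $\mu_t\omega_a-\mu_a\omega_t\ge 0$ and $\mu_a\phi_{s,t}-\omega_a\psi_{s,t}>0$. *)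

(* Defs.v *)
From mathcomp Require Import all_boot all_order all_algebra.
Set Implicit Arguments. Unset Strict Implicit. Unset Printing Implicit Defensive.
Import Order.TTheory GRing.Theory Num.Theory.
Local Open Scope ring_scope.

Definition mu (R : realFieldType) (x y : R) (d : nat) : R :=
  (x + y) ^+ d - x ^+ d - y ^+ d.
Definition omega (R : realFieldType) (x y : R) (d : nat) : R :=
  x ^+ d + y ^+ d - 2 * ((x + y) / 2) ^+ d.
Definition psi (R : realFieldType) (x y : R) (d1 d2 : nat) : R :=
  x ^+ d1 * y ^+ d2 + x ^+ d2 * y ^+ d1.
Definition phi (R : realFieldType) (x y : R) (d1 d2 : nat) : R :=
  2 * ((x + y) / 2) ^+ (d1 + d2) - x ^+ d1 * y ^+ d2 - x ^+ d2 * y ^+ d1.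

(* Main.v *)
Require Import Defs.
From mathcomp Require Import all_boot all_order all_algebra ring lra zify.
Import Order.TTheory GRing.Theory Num.Theory.
Local Open Scope ring_scope.

Section S.
Variable R : realFieldType.
Implicit Types x y h c X Y : R.

Lemma sgn_lem x y n : 0 <= x -> 0 <= y -> 0 <= (x - y) * (x ^+ n - y ^+ n).
Proof.
move=> hx hy; case: (lerP x y) => H.
- have := lerXn2r n (x:=x) (y:=y); rewrite !nnegrE => /(_ hx hy H) H2. nra.
- have := lerXn2r n (x:=y) (y:=x); rewrite !nnegrE => /(_ hy hx (ltW H)) H2. nra.
Qed.

Lemma cheb x y n : 0 <= x -> 0 <= y ->
  (x + y) * (x ^+ n + y ^+ n) <= 2 * (x ^+ n.+1 + y ^+ n.+1).
Proof.
move=> hx hy; have := sgn_lem x y n hx hy; rewrite !exprS; nra.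
Qed.

Definition mu' x y d := (x + y) ^+ d - x ^+ d - y ^+ d.

Lemma murec x y d : mu' x y d.+2 = (x + y) * mu' x y d.+1 + x * y * (x ^+ d + y ^+ d).
Proof. rewrite /mu' ![_ ^+ d.+2]exprS ![_ ^+ d.+1]exprS; ring. Qed.

Lemma mu_ge0 x y d : 0 <= x -> 0 <= y -> 0 <= mu' x y d.+1.
Proof.
move=> hx hy; elim: d => [|d IH]; first by rewrite /mu' !expr1; lra.
rewrite murec; have h1 := exprn_ge0 d hx; have h2 := exprn_ge0 d hy.
have : 0 <= x * y by exact: mulr_ge0. have : 0 <= x + y by lra. nra.
Qed.

Lemma mu_gt0 x y d : 0 < x -> 0 < y -> 0 < mu' x y d.+2.
Proof.
move=> hx hy; rewrite murec; have h1 := exprn_gt0 d hx; have h2 := exprn_gt0 d hy.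
have := mu_ge0 x y d (ltW hx) (ltW hy).
have : 0 < x * y by exact: mulr_gt0. have : 0 <= x + y by lra. nra.
Qed.

Lemma L1 x y n : 0 <= x -> 0 <= y ->
  2 * mu' x y n.+2 <= (2 ^+ n.+2 - 2) * (x * y) * (x ^+ n + y ^+ n).
Proof.
move=> hx hy; elim: n => [|n IH].
  rewrite /mu' !expr0 !exprS !expr0; lra.
rewrite murec.
have hc := cheb x y n hx hy.
have hxy : 0 <= x * y by exact: mulr_ge0.
have h2 : 2 <= 2 ^+ n.+2 :> R.
  rewrite exprS; have := exprn_ege1 n.+1 (ler1n R 2); lra.
have hs := addr_ge0 hx hy.
set S := x ^+ n + y ^+ n in hc IH *. set S1 := x ^+ n.+1 + y ^+ n.+1 in hc *.
set M := mu' x y n.+2 in IH *.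
have e : (2:R) ^+ n.+3 = 2 * 2 ^+ n.+2 by rewrite exprS.
rewrite e.
have H1 : (x + y) * (2 * M) <= (x + y) * ((2 ^+ n.+2 - 2) * (x * y) * S) by exact: ler_wpM2l.
have H2 : (2 ^+ n.+2 - 2) * (x * y) * ((x + y) * S) <= (2 ^+ n.+2 - 2) * (x * y) * (2 * S1).
  apply: ler_wpM2l => //; apply: mulr_ge0 => //; lra.
nra.
Qed.

Lemma rho_step x y n : 0 <= x -> 0 <= y -> x + y = 2 ->
  (2 ^+ n.+3 - 2) * mu' x y n.+2 <= (2 ^+ n.+2 - 2) * mu' x y n.+3.
Proof.
move=> hx hy hs.
have hl := L1 x y n hx hy. have hc := cheb x y n hx hy.
rewrite (murec x y n.+1) hs.
have hxy : 0 <= x * y by exact: mulr_ge0.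
have h2 : 2 <= 2 ^+ n.+2 :> R.
  rewrite exprS; have := exprn_ege1 n.+1 (ler1n R 2); lra.
have e : (2:R) ^+ n.+3 = 2 * 2 ^+ n.+2 by rewrite exprS.
rewrite e. rewrite hs in hc.
set S := x ^+ n + y ^+ n in hc hl *. set S1 := x ^+ n.+1 + y ^+ n.+1 in hc *.
set M := mu' x y n.+2 in hl *. set c := 2 ^+ n.+2 in h2 hl *.
have H2 : (c - 2) * (x * y) * S <= (c - 2) * (x * y) * S1.
  apply: ler_wpM2l; [apply: mulr_ge0 => //; lra | lra].
nra.
Qed.

Definition rr x y d := mu' x y d / (2 ^+ d - 2).

Lemma two_pow_gt2 n : 2 < (2:R) ^+ n.+2.
Proof.
rewrite exprS; have := exprn_ege1 n.+1 (ler1n R 2).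
have : (1:R) < 2 ^+ n.+1 by rewrite exprn_egt1 // ltr1n.
lra.
Qed.

Lemma rr_step x y n : 0 < x -> 0 < y -> x + y = 2 ->
  rr x y n.+2 <= rr x y n.+3.
Proof.
move=> hx hy hs.
have g1 := two_pow_gt2 n. have g2 := two_pow_gt2 n.+1.
rewrite /rr ler_pdivrMr; last by lra.
rewrite mulrAC ler_pdivlMr; last by lra.
have := rho_step x y n (ltW hx) (ltW hy) hs. nra.
Qed.

Lemma rr_mono x y a m : 0 < x -> 0 < y -> x + y = 2 ->
  rr x y a.+2 <= rr x y (a.+2 + m).
Proof.
move=> hx hy hs; elim: m => [|m IH]; first by rewrite addn0.
apply: (le_trans IH); rewrite addnS.
change (rr x y (a + m).+2 <= rr x y (a + m).+3).
exact: rr_step.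
Qed.

Lemma bern (v : R) k : 0 <= v -> 1 + k%:R * v <= (1 + v) ^+ k.
Proof.
move=> hv; elim: k => [|k IH]; first by rewrite expr0; lra.
rewrite exprS -natr1.
have h := exprn_ge0 k (addr_ge0 ler01 hv).
have : 0 <= k%:R * v * v by apply: mulr_ge0 => //; apply: mulr_ge0.
nra.
Qed.

Lemma Tbound h k : 0 <= h ->
  (1 + h) ^+ k + (1 - h) ^+ k <= 2 * (1 + h ^+ 2) ^+ 'C(k, 2) /\
  (1 + h) ^+ k - (1 - h) ^+ k <= 2 * k%:R * h * (1 + h ^+ 2) ^+ 'C(k, 2).
Proof.
move=> hh; elim: k => [|k [IH1 IH2]].
  by rewrite !expr0 /= mulr0 mul0r; lra.
have hv : 0 <= h ^+ 2 by exact: sqr_ge0.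
have hE' : 1 <= (1 + h ^+ 2) ^+ 'C(k, 2) by apply: exprn_ege1; lra.
have hb := bern (h ^+ 2) k hv.
have hK : 1 <= (1 + h ^+ 2) ^+ k by apply: exprn_ege1; lra.
have ek : 'C(k.+1, 2) = ('C(k, 2) + k)%N by rewrite binS bin1.
rewrite ek exprD.
set E := (1 + h ^+ 2) ^+ 'C(k, 2) in IH1 IH2 hE' *.
set K := (1 + h ^+ 2) ^+ k in hb hK *.
rewrite !exprS -natr1.
have hk : 0 <= k%:R :> R by exact: ler0n.
set A := (1 + h) ^+ k in IH1 IH2 *. set B := (1 - h) ^+ k in IH1 IH2 *.
have e2 : h ^+ 2 = h * h by rewrite expr2.
rewrite e2 in hb.
split.
- have H1 : h * (A - B) <= h * (2 * k%:R * h * E) by apply: ler_wpM2l.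
  have H2 : 2 * E * (1 + k%:R * (h * h)) <= 2 * E * K by apply: ler_wpM2l => //; lra.
  nra.
- have H1 : h * (A + B) <= h * (2 * E) by apply: ler_wpM2l.
  have H2 : 2 * (k%:R + 1) * h * E <= 2 * (k%:R + 1) * h * E * K.
    rewrite -{1}(mulr1 (2 * (k%:R + 1) * h * E)); apply: ler_wpM2l => //.
    repeat apply: mulr_ge0 => //; lra.
  nra.
Qed.

Lemma chord h a : 0 <= h -> h <= 1 ->
  (1 + h) ^+ a.+1 + (1 - h) ^+ a.+1 <= 2 + (2 ^+ a.+1 - 2) * h ^+ 2 /\
  (1 + h) ^+ a.+1 - (1 - h) ^+ a.+1 <= 2 ^+ a.+1 * h.
Proof.
move=> h0 h1; elim: a => [|a [IH1 IH2]].
  rewrite !expr1; lra.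
have g : 2 <= (2:R) ^+ a.+1.
  rewrite exprS; have := exprn_ege1 a (ler1n R 2); lra.
have e : (2:R) ^+ a.+2 = 2 * 2 ^+ a.+1 by rewrite exprS.
rewrite e [(1 + h) ^+ a.+2]exprS [(1 - h) ^+ a.+2]exprS.
set c := 2 ^+ a.+1 in g IH1 IH2 *.
set A := (1 + h) ^+ a.+1 in IH1 IH2 *. set B := (1 - h) ^+ a.+1 in IH1 IH2 *.
have e2 : h ^+ 2 = h * h by rewrite expr2.
rewrite e2 in IH1 *.
have hh2 : h * h <= 1 by nra.
split.
- have H1 : h * (A - B) <= h * (c * h) by apply: ler_wpM2l.
  nra.
- have H1 : h * (A + B) <= h * (2 + (c - 2) * (h * h)) by apply: ler_wpM2l.
  have H2 : (c - 2) * (h * h) <= c - 2 by rewrite -{2}(mulr1 (c - 2)); apply: ler_wpM2l => //; lra.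
  have H3 : h * (2 + (c - 2) * (h * h)) <= h * c by apply: ler_wpM2l => //; lra.
  nra.
Qed.

Lemma psi_step x y s m : 0 <= x -> 0 <= y -> x + y = 2 ->
  psi x y s.+1 (s.+1 + m) <= psi x y s (s.+1 + m).
Proof.
move=> hx hy hs.
have hg := sgn_lem x y m.+1 hx hy.
have hP : 0 <= x ^+ s * y ^+ s by apply: mulr_ge0; apply: exprn_ge0.
have key : (x + y) * psi x y s (s.+1 + m) - 2 * psi x y s.+1 (s.+1 + m)
   = (x ^+ s * y ^+ s) * ((x - y) * (x ^+ m.+1 - y ^+ m.+1)).
  rewrite /psi !exprD !exprS; ring.
rewrite hs in key.
have := mulr_ge0 hP hg. rewrite -key. lra.
Qed.

Lemma psi_chain x y a j t : 0 <= x -> 0 <= y -> x + y = 2 -> (a + j <= t)%N ->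
  psi x y (a + j) t <= psi x y a t.
Proof.
move=> hx hy hs; elim: j => [|j IH] hj; first by rewrite addn0.
have hj' : (a + j <= t)%N by apply: leq_trans hj; rewrite addnS.
apply: le_trans (IH hj').
rewrite addnS -(subnKC hj).
rewrite addnS.
exact: psi_step.
Qed.

Lemma psi_id x y a k : psi x y a (a + k) = (x * y) ^+ a * (x ^+ k + y ^+ k).
Proof. rewrite /psi !exprD exprMn; ring. Qed.

Lemma om_eq x y d : x + y = 2 -> omega x y d = (2 ^+ d - 2) - mu x y d.
Proof.
move=> hs; rewrite /omega /mu hs divff ?expr1n ?mulr1; last by rewrite pnatr_eq0.
lra.
Qed.

Lemma phi_eq x y s t : x + y = 2 -> phi x y s t = 2 - psi x y s t.
Proof.
move=> hs; rewrite /phi /psi hs divff ?expr1n ?mulr1; last by rewrite pnatr_eq0.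
lra.
Qed.

Lemma mu_eq x y d : mu x y d = mu' x y d. Proof. by []. Qed.

Lemma main_norm x y a b s t : 0 < y -> y < x -> x + y = 2 ->
  (2 <= a)%N -> (t <= b)%N -> (s <= t)%N -> (a <= s)%N -> ('C(b - a, 2) < a)%N ->
  omega x y t / mu x y t <= omega x y a / mu x y a /\
  omega x y a / mu x y a < phi x y s t / psi x y s t.
Proof.
move=> hy hyx hs ha htb hst has hC.
have hx : 0 < x by timeout 10 lra.
case: a ha has hC => [|[|a']] // _ has hC.
have hat : (a'.+2 <= t)%N by apply: leq_trans hst.
have muA := mu_gt0 x y a' hx hy.
rewrite mu_eq. rewrite -/(mu' x y a'.+2) in muA.
split.
-
  have [m ->] : exists m, t = (a'.+2 + m)%N by exists (t - a'.+2)%N; rewrite subnKC.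
  have muT := mu_gt0 x y (a' + m) hx hy.
  have hr := rr_mono x y a' m hx hy hs.
  rewrite /rr in hr.
  have e : (a'.+2 + m)%N = (a' + m).+2 by []. rewrite e in hr *.
  rewrite !om_eq // !mu_eq.
  have g1 := two_pow_gt2 a'. have g2 := two_pow_gt2 (a' + m).
  rewrite ler_pdivrMr // mulrAC ler_pdivlMr //.
  rewrite ler_pdivrMr in hr; last by timeout 10 lra.
  rewrite mulrAC ler_pdivlMr in hr; last by timeout 10 lra.
  lra.
-
  set h := x - 1.
  have ex : x = 1 + h by rewrite /h; timeout 10 lra.
  have ey : y = 1 - h by rewrite /h; timeout 10 lra.
  have h0 : 0 < h by rewrite /h; timeout 10 lra.
  have h1 : h < 1 by rewrite /h; timeout 10 lra.
  have [k ek] : exists k, t = (a'.+2 + k)%N by exists (t - a'.+2)%N; rewrite subnKC.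
  have hk : ('C(k, 2) <= a'.+1)%N.
    have : ('C(k, 2) <= 'C(b - a'.+2, 2))%N.
      apply: leq_bin2l; lia.
    move=> H; rewrite -ltnS; exact: leq_ltn_trans H hC.
  have [j ej] : exists j, s = (a'.+2 + j)%N by exists (s - a'.+2)%N; rewrite subnKC.
  have hps : psi x y s t <= psi x y a'.+2 t.
    rewrite ej; apply: psi_chain; try timeout 10 lra; by rewrite -ej.
  have hpsi0 : 0 < psi x y s t.
    rewrite /psi; apply: addr_gt0; apply: mulr_gt0; exact: exprn_gt0.
  have hv : 0 <= h ^+ 2 by exact: sqr_ge0.
  have [hT _] := Tbound h k (ltW h0).
  have hE : (1 + h ^+ 2) ^+ 'C(k, 2) <= (1 + h ^+ 2) ^+ a'.+1.
    apply: ler_weXn2l => //; timeout 10 lra.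
  have hxy : x * y = 1 - h ^+ 2 by rewrite ex ey expr2; ring.
  have hh2 : h ^+ 2 < 1 by rewrite expr2; timeout 10 nra.
  have hh2p : 0 < h ^+ 2 by rewrite expr2; timeout 10 nra.
  have hprod : (1 - h ^+ 2) ^+ a'.+1 * (1 + h ^+ 2) ^+ a'.+1 < 1.
    rewrite -exprMn exprn_ilt1 //.
      have -> : (1 - h ^+ 2) * (1 + h ^+ 2) = 1 - h ^+ 2 * h ^+ 2 by ring.
      timeout 10 nra.
    have -> : (1 - h ^+ 2) * (1 + h ^+ 2) = 1 - h ^+ 2 * h ^+ 2 by ring.
    timeout 10 nra.
  have hpsiA : psi x y a'.+2 t < 2 * (1 - h ^+ 2).
    rewrite ek psi_id hxy exprS.
    have hX : x ^+ k + y ^+ k <= 2 * (1 + h ^+ 2) ^+ a'.+1.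
      rewrite ex ey; timeout 10 lra.
    have p1 : 0 <= (1 - h ^+ 2) ^+ a'.+1 by apply: exprn_ge0; timeout 10 lra.
    have := ler_wpM2l p1 hX.
    set P := (1 - h ^+ 2) ^+ a'.+1 in p1 hprod *.
    set Q := (1 + h ^+ 2) ^+ a'.+1 in hprod *.
    set X := x ^+ k + y ^+ k.
    move=> HH.
    have hu : 0 < 1 - h ^+ 2 by lra.
    have HH2 := ler_wpM2l (ltW hu) HH.
    have HH3 : (1 - h ^+ 2) * (P * Q) < (1 - h ^+ 2) * 1 by rewrite ltr_pM2l.
    lra.
  have [hch _] := chord h a'.+1 (ltW h0) (ltW h1).
  have hmuA : (2 ^+ a'.+2 - 2) * (1 - h ^+ 2) <= mu' x y a'.+2.
    rewrite /mu' hs ex ey; timeout 10 lra.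
  have g1 := two_pow_gt2 a'.
  rewrite om_eq // phi_eq // mu_eq.
  rewrite ltr_pdivrMr // mulrAC ltr_pdivlMr //.
  set M := mu' x y a'.+2 in muA hmuA *.
  set c := 2 ^+ a'.+2 in g1 hmuA *.
  set P := psi x y s t in hps hpsi0 *.
  have : (c - 2) * P < (c - 2) * (2 * (1 - h ^+ 2)).
    rewrite ltr_pM2l; [timeout 10 lra | timeout 10 lra].
  lra.
Qed.

Lemma mu_sc c X Y d : mu (c * X) (c * Y) d = c ^+ d * mu X Y d.
Proof. by rewrite /mu -mulrDr !exprMn !mulrBr. Qed.

Lemma aux1 (p q r w : R) : p * q + p * r - 2 * (p * w) = p * (q + r - 2 * w).
Proof. ring. Qed.

Lemma aux2 (p1 p2 q1 q2 r1 r2 w : R) :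
  p1 * q1 * (p2 * r2) + p2 * r1 * (p1 * q2) = p1 * p2 * (q1 * r2 + r1 * q2).
Proof. ring. Qed.

Lemma aux3 (p1 p2 q1 q2 r1 r2 w : R) :
  2 * (p1 * p2 * w) - p1 * q1 * (p2 * r2) - p2 * r1 * (p1 * q2) =
  p1 * p2 * (2 * w - q1 * r2 - r1 * q2).
Proof. ring. Qed.

Lemma om_sc c X Y d : omega (c * X) (c * Y) d = c ^+ d * omega X Y d.
Proof. by rewrite /omega -mulrDr -mulrA !exprMn aux1. Qed.

Lemma psi_sc c X Y s t : psi (c * X) (c * Y) s t = c ^+ (s + t) * psi X Y s t.
Proof. by rewrite /psi !exprMn exprD (aux2 _ _ _ _ _ _ 0). Qed.

Lemma phi_sc c X Y s t : phi (c * X) (c * Y) s t = c ^+ (s + t) * phi X Y s t.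
Proof. by rewrite /phi -mulrDr -mulrA !exprMn [c ^+ (s + t)]exprD aux3. Qed.

Lemma canc c n (A B : R) : c != 0 -> (c ^+ n * A) / (c ^+ n * B) = A / B.
Proof. by move=> hc; rewrite -mulf_div divff ?mul1r // expf_neq0. Qed.

Lemma main_gen x y a b s t : 0 < y -> y < x ->
  (2 <= a)%N -> (t <= b)%N -> (s <= t)%N -> (a <= s)%N -> ('C(b - a, 2) < a)%N ->
  omega x y t / mu x y t <= omega x y a / mu x y a /\
  omega x y a / mu x y a < phi x y s t / psi x y s t.
Proof.
move=> hy hyx H1 H2 H3 H4 H5.
have hx : 0 < x by lra.
have [c [X [Y [hc [ex [ey [hs [hY hYX]]]]]]]] :
  exists c X Y, 0 < c /\ x = c * X /\ y = c * Y /\ X + Y = 2 /\ 0 < Y /\ Y < X.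
  exists ((x + y) / 2), (x / ((x + y) / 2)), (y / ((x + y) / 2)).
  have hc : 0 < (x + y) / 2 by lra.
  split => //; split; first by rewrite mulrC divfK // gt_eqF.
  split; first by rewrite mulrC divfK // gt_eqF.
  split; first by rewrite -mulrDl; field; lra.
  split; first exact: divr_gt0.
  by rewrite ltr_pM2r // invr_gt0.
subst x y.
have hc0 : c != 0 by rewrite gt_eqF.
rewrite !mu_sc !om_sc psi_sc phi_sc !canc //.
exact: (@main_norm X Y a b s t hY hYX hs H1 H2 H3 H4 H5).
Qed.
End S.

Lemma mu_sym (R : realFieldType) (x y : R) d : mu x y d = mu y x d.
Proof. rewrite /mu [y + x]addrC; lra. Qed.
Lemma om_sym (R : realFieldType) (x y : R) d : omega x y d = omega y x d.
Proof. rewrite /omega [y + x]addrC; lra. Qed.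
Lemma psi_sym (R : realFieldType) (x y : R) s t : psi x y s t = psi y x s t.
Proof. rewrite /psi; rewrite [y ^+ s * _]mulrC [y ^+ t * _]mulrC; lra. Qed.
Lemma phi_sym (R : realFieldType) (x y : R) s t : phi x y s t = phi y x s t.
Proof. rewrite /phi [y + x]addrC [y ^+ s * _]mulrC [y ^+ t * _]mulrC; lra. Qed.

Theorem proposition3p3 (R : realFieldType) (x y : R) (a b s t : nat) :
  0 < x -> 0 < y -> x != y ->
  (2 <= a)%N -> (t <= b)%N -> (s <= t)%N -> (a <= s)%N -> ('C(b - a, 2) < a)%N ->
  omega x y t / mu x y t <= omega x y a / mu x y a /\
  omega x y a / mu x y a < phi x y s t / psi x y s t.
Proof.
move=> hx hy hne H1 H2 H3 H4 H5.
case: (ltgtP x y) => [hxy|hxy|hxy]; last by rewrite hxy eqxx in hne.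
- rewrite !(mu_sym _ x) !(om_sym _ x) (psi_sym _ x) (phi_sym _ x).
  exact: (@main_gen R y x a b s t hx hxy H1 H2 H3 H4 H5).
- exact: (@main_gen R x y a b s t hy hxy H1 H2 H3 H4 H5).
Qed.
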